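(* Let $N\in\mathbb N$ and let $\Pi$ be a set of two-coloured partitions containing the four mixed-coloured pair partitions. Let $x=(x_1,\dots,x_N)^T$ be the generators of $C(X_N(\Pi))$ and $u=(u_{ij})$ the fundamental matrix of $G_N(\Pi)$. Then $x_i\mapsto u_{i1}$, $1\le i\le N$, defines a unital $*$-homomorphism $C(X_N(\Pi))\to C(G_N(\Pi))$.
   Context: $[n]:=\{1,\dots,n\}$; $[N]^0=\{\epsilon\}$. A two-coloured partition on $k$ upper and $l$ lower points is a partition of the $k$ upper and $l$ lower points (each row ordered left to right) into non-empty disjoint blocks, each point coloured $1$ (white) or $*$ (black); $\mathcal P(\omega,\omega')$ denotes those with upper colour word $\omega\in\{1,*\}^k$ and lower colour word $\omega'\in\{1,*\}^l$. A through-block contains upper and lower points; $tb(p)$ is their number. A row labeling (labels left to right in $[N]$) is valid if points of that row in a common block carry equal labels; $\epsilon$ is valid. Decomposition of labelings of $p$: $T_0$ (resp. $T'_0$) = invalid upper (resp. lower) row labelings; $r=N^{tb(p)}$; enumerate the assignments of labels in $[N]$ to the through-blocks as $1,\dots,r$; $T_i$ (resp. $T'_i$) = valid upper (resp. lower) row labelings giving each through-block the label of the $i$-th assignment. $a^1:=a$, $a^*$ = adjoint; empty products equal $\mathbb 1$. Mixed-coloured pair partitions: the four partitions consisting of a single block of two points of opposite colours, both in the upper row or both in the lower row. Relations $R^{Gr}_p(u)$ for an $N\times N$ matrix $u$ and $p\in\mathcal P(\omega,\omega')$: (i) $\sum_{t\in T_i}u_{t_1\gamma_1}^{\omega_1}\cdots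 u_{t_k\gamma_k}^{\omega_k}=\sum_{t'\in T'_j}u_{\gamma'_1t'_1}^{\omega'_1}\cdots u_{\gamma'_lt'_l}^{\omega'_l}$ for $1\le i,j\le r$, $\gamma\in T_j$, $\gamma'\in T'_i$; (ii) $\sum_{t\in T_i}u_{t_1\gamma_1}^{\omega_1}\cdots u_{t_k\gamma_k}^{\omega_k}=0$ for $\gamma\in T_0$, $1\le i\le r$; (iii) $\sum_{t'\in T'_j}u_{\gamma'_1t'_1}^{\omega'_1}\cdots u_{\gamma'_lt'_l}^{\omega'_l}=0$ for $\gamma'\in T'_0$, $1\le j\le r$. $C(G_N(\Pi))$ is the universal unital $C^*$-algebra generated by $u_{ij}$ ($1\le i,j\le N$) subject to $R^{Gr}_p(u)$ for all $p\in\Pi$ (easy quantum group $G_N(\Pi)$). Relations $R^{Sp}_p(x)$ for a vector $x=(x_1,\dots,x_N)$ and $p\in\mathcal P(\omega,\omega')$: $\sum_{t\in T_i}x_{t_1}^{\omega_1}\cdots x_{t_k}^{\omega_k}=\sum_{t'\in T'_i}x_{t'_1}^{\omega'_1}\cdots x_{t'_l}^{\omega'_l}$ for all $1\le i\le r$. $C(X_N(\Pi))$ is the universal unital $C^*$-algebra generated by $x_1,\dots,x_N$ subject to $R^{Sp}_p(x)$ for all $p\in\Pi$ (partition quantum space of one vector; it exists since the relations force $\sum_i x_ix_i^*=\mathbb 1$). *)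

(* Defs.v *)
From HB Require Import structures.
From mathcomp Require Import all_boot all_order all_algebra all_field.
Set Implicit Arguments. Unset Strict Implicit. Unset Printing Implicit Defensive.
Import GRing.Theory Num.Theory.
Local Open Scope ring_scope.

(* A two-coloured partition on tk upper and tl lower points.
   Points are 'I_(tk + tl): upper point a is lshift, lower point b is rshift.
   Two points lie in the same block iff tblk gives them the same label.
   Colour true = black ( * ), false = white (1). *)
Record tcpart := TCPart {
  tk : nat; tl : nat;
  tup : 'I_tk -> bool;
  tlo : 'I_tl -> bool;
  tblk : 'I_(tk + tl) -> nat }.
Arguments tblk : clear implicits.
Arguments tup : clear implicits.
Arguments tlo : clear implicits.

Definition upt (p : tcpart) (a : 'I_(tk p)) : 'I_(tk p + tl p) := lshift (tl p) a.
Definition lpt (p : tcpart) (b : 'I_(tl p)) : 'I_(tk p + tl p) := rshift (tk p) b.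

Definition sameblk (p : tcpart) (x y : 'I_(tk p + tl p)) : bool := tblk p x == tblk p y.
Arguments sameblk : clear implicits.

Definition through (p : tcpart) (x : 'I_(tk p + tl p)) : bool :=
  [exists a, sameblk p (upt a) x] && [exists b, sameblk p (lpt b) x].
Arguments through : clear implicits.

(* The four mixed-coloured pair partitions (canonical representatives). *)
Definition pair_up (c : 'I_2 -> bool) : tcpart := @TCPart 2 0 c (fun _ => false) (fun _ => 0%N).
Definition pair_lo (c : 'I_2 -> bool) : tcpart := @TCPart 0 2 (fun _ => false) c (fun _ => 0%N).
Definition col_wb (a : 'I_2) : bool := (a == 1 :> nat).
Definition col_bw (a : 'I_2) : bool := (a == 0 :> nat).

Section Labelings.
Variable N : nat.

Definition valid_up (p : tcpart) (t : {ffun 'I_(tk p) -> 'I_N}) : bool :=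
  [forall a, forall a', sameblk p (upt a) (upt a') ==> (t a == t a')].
Definition valid_lo (p : tcpart) (t : {ffun 'I_(tl p) -> 'I_N}) : bool :=
  [forall b, forall b', sameblk p (lpt b) (lpt b') ==> (t b == t b')].

(* An assignment of labels in [N] to the through-blocks, recorded pointwise:
   c x = Some l iff x is in a through-block labelled l. *)
Definition assignment (p : tcpart) (c : 'I_(tk p + tl p) -> option 'I_N) : Prop :=
  (forall x, (c x != None) = through p x) /\
  (forall x y, sameblk p x y -> c x = c y).

Definition inT_up (p : tcpart) c (t : {ffun 'I_(tk p) -> 'I_N}) : bool :=
  valid_up t && [forall a, through p (upt a) ==> (c (upt a) == Some (t a))].
Definition inT_lo (p : tcpart) c (t : {ffun 'I_(tl p) -> 'I_N}) : bool :=
  valid_lo t && [forall b, through p (lpt b) ==> (c (lpt b) == Some (t b))].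

End Labelings.
Arguments assignment {N} p c.
Arguments valid_up {N} p t.
Arguments valid_lo {N} p t.
Arguments inT_up {N} p c t.
Arguments inT_lo {N} p c t.

Definition is_star (A : algType algC) (star : A -> A) : Prop :=
  [/\ forall a b, star (a + b) = star a + star b,
      forall (l : algC) a, star (l *: a) = (l^*)%C *: star a,
      forall a b, star (a * b) = star b * star a,
      forall a, star (star a) = a & star 1 = 1].

Definition pw (A : algType algC) (star : A -> A) (b : bool) (a : A) : A :=
  if b then star a else a.

Definition RGr (A : algType algC) (star : A -> A) (N : nat)
    (u : 'I_N -> 'I_N -> A) (p : tcpart) : Prop :=
  let U (t g : {ffun 'I_(tk p) -> 'I_N}) := \prod_(a < tk p) pw star (tup p a) (u (t a) (g a)) in
  let L (g t : {ffun 'I_(tl p) -> 'I_N}) := \prod_(b < tl p) pw star (tlo p b) (u (g b) (t b)) in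
  [/\ (forall ci cj, assignment p ci -> assignment p cj ->
         forall (g : {ffun 'I_(tk p) -> 'I_N}) (g' : {ffun 'I_(tl p) -> 'I_N}),
         inT_up p cj g -> inT_lo p ci g' ->
         \sum_(t | inT_up p ci t) U t g = \sum_(t' | inT_lo p cj t') L g' t'),
      (forall g : {ffun 'I_(tk p) -> 'I_N}, ~~ valid_up p g ->
         forall ci, assignment p ci -> \sum_(t | inT_up p ci t) U t g = 0) &
      (forall g' : {ffun 'I_(tl p) -> 'I_N}, ~~ valid_lo p g' ->
         forall cj, assignment p cj -> \sum_(t' | inT_lo p cj t') L g' t' = 0)].

Definition RSp (A : algType algC) (star : A -> A) (N : nat)
    (x : 'I_N -> A) (p : tcpart) : Prop :=
  forall ci, assignment p ci ->
    \sum_(t : {ffun 'I_(tk p) -> 'I_N} | inT_up p ci t)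
        \prod_(a < tk p) pw star (tup p a) (x (t a))
    = \sum_(t' : {ffun 'I_(tl p) -> 'I_N} | inT_lo p ci t')
        \prod_(b < tl p) pw star (tlo p b) (x (t' b)).

(* Main.v *)
Require Import Defs.
From HB Require Import structures.
From mathcomp Require Import all_boot all_order all_algebra all_field.
From mathcomp Require Import zify.
Local Open Scope ring_scope.

Module Helpers.
Set Implicit Arguments. Unset Strict Implicit. Unset Printing Implicit Defensive.
Import GRing.Theory Num.Theory.

Section Star.
Variables (A : algType algC) (star : A -> A) (Hs : is_star star).

Lemma starD a b : star (a + b) = star a + star b. Proof. by case: Hs. Qed.
Lemma starM a b : star (a * b) = star b * star a. Proof. by case: Hs. Qed.
Lemma starK a : star (star a) = a. Proof. by case: Hs. Qed.
Lemma star1 : star 1 = 1. Proof. by case: Hs. Qed.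
Lemma star0 : star 0 = 0.
Proof. apply: (addrI (star 0)); by rewrite addr0 -starD addr0. Qed.
Lemma star_sum (I : Type) (r : seq I) (P : pred I) (F : I -> A) :
  star (\sum_(i <- r | P i) F i) = \sum_(i <- r | P i) star (F i).
Proof. by apply: big_morph; [exact: starD | exact: star0]. Qed.

Lemma rev_max k : rev_ord (@ord_max k) = ord0.
Proof. apply: val_inj => /=; lia. Qed.
Lemma rev_ord0 k : rev_ord (@ord0 k) = ord_max.
Proof. apply: val_inj => /=; lia. Qed.
Lemma rev_widen k (a : 'I_k) : rev_ord (widen_ord (leqnSn k) a) = lift ord0 (rev_ord a).
Proof. apply: val_inj => /=; rewrite /bump /=; have := ltn_ord a; lia. Qed.
Lemma rev_lift k (a : 'I_k) : rev_ord (lift ord0 a) = widen_ord (leqnSn k) (rev_ord a).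
Proof. apply: val_inj => /=; rewrite /bump /=; have := ltn_ord a; lia. Qed.

Lemma star_prod k (x : 'I_k -> A) :
  star (\prod_(a < k) x a) = \prod_(a < k) star (x (rev_ord a)).
Proof.
elim: k x => [|k IH] x; first by rewrite !big_ord0 star1.
rewrite big_ord_recr starM IH big_ord_recl /= rev_ord0.
congr (_ * _); apply: eq_bigr => a _; by rewrite rev_lift.
Qed.

Definition fcons N k (j : 'I_N) (g : {ffun 'I_k -> 'I_N}) : {ffun 'I_k.+1 -> 'I_N} :=
  [ffun a => if unlift ord0 a is Some a' then g a' else j].

Lemma sum_ffunS N k (F : {ffun 'I_k.+1 -> 'I_N} -> A) :
  \sum_g F g = \sum_(j : 'I_N) \sum_(g : {ffun 'I_k -> 'I_N}) F (fcons j g).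
Proof.
rewrite pair_big /=; apply: (reindex (fun p : 'I_N * {ffun 'I_k -> 'I_N} => fcons p.1 p.2)).
exists (fun g : {ffun 'I_k.+1 -> 'I_N} => (g ord0, [ffun a : 'I_k => g (lift ord0 a)])).
- move=> [j g] _ /=; rewrite /fcons ffunE unlift_none; congr pair.
  by apply/ffunP => a; rewrite !ffunE liftK.
- move=> g _; apply/ffunP => a; rewrite /fcons ffunE.
  by case: unliftP => [a'|] ->; rewrite ?ffunE.
Qed.

Lemma forallS k (e : 'I_k.+1 -> bool) :
  [forall a, e a] = e ord0 && [forall a, e (lift ord0 a)].
Proof.
apply/forallP/andP => [H|[H0 /forallP H] a]; first by split=> //; apply/forallP.
by case: (unliftP ord0 a) => [a'|] ->.
Qed.

Lemma nest1 N k (f g : 'I_k -> 'I_N -> A) (e : 'I_k -> bool) :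
  (forall a, \sum_j f a j * g a j = (e a)%:R) ->
  \sum_(h : {ffun 'I_k -> 'I_N})
     (\prod_(a < k) f a (h a)) * (\prod_(a < k) g (rev_ord a) (h (rev_ord a)))
  = [forall a, e a]%:R.
Proof.
elim: k f g e => [|k IH] f g e H.
  under eq_bigr do rewrite !big_ord0 mulr1.
  rewrite sumr_const card_ffun !card_ord expn0.
  have -> : [forall a : 'I_0, e a] by apply/forallP => -[].
  by [].
rewrite sum_ffunS.
have IH' := IH (fun a => f (lift ord0 a)) (fun a => g (lift ord0 a)) (fun a => e (lift ord0 a)) (fun a => H _).
rewrite forallS -mulnb natrM -H mulr_suml.
apply: eq_bigr => j _.
under eq_bigr => h _ do rewrite big_ord_recl big_ord_recr /= rev_max
   /fcons !ffunE unlift_none.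

under eq_bigr => h _.
  under eq_bigr => a _ do rewrite !ffunE liftK.
  under [X in _ * (X * _)]eq_bigr => a _ do rewrite rev_widen !ffunE liftK.
  rewrite mulrA -(mulrA (f _ _)).
  over.
by rewrite -mulr_suml -mulr_sumr IH' -mulrA -commr_nat mulrA.
Qed.

Lemma nest2 N k (f g : 'I_k -> 'I_N -> A) (e : 'I_k -> bool) :
  (forall a, \sum_j g a j * f a j = (e a)%:R) ->
  \sum_(h : {ffun 'I_k -> 'I_N})
     (\prod_(a < k) g (rev_ord a) (h (rev_ord a))) * (\prod_(a < k) f a (h a))
  = [forall a, e a]%:R.
Proof.
move=> H.
have := nest1 (f := fun a => g (rev_ord a)) (g := fun a => f (rev_ord a))
   (e := fun a => e (rev_ord a)) (fun a => H _).
rewrite (reindex_inj (h := fun h : {ffun 'I_k -> 'I_N} => [ffun a => h (rev_ord a)])) /=.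
  under eq_bigr => h _.
    under eq_bigr => a _ do rewrite ffunE.
    under [X in _ * X]eq_bigr => a _ do rewrite ffunE !rev_ordK.
    over.
  move=> ->.
  suff -> : [forall a, e (rev_ord a)] = [forall a, e a] by [].
  apply/forallP/forallP => Hf a; first by have := Hf (rev_ord a); rewrite rev_ordK.
  exact: Hf.
move=> x y /ffunP Hxy; apply/ffunP => a.
by have := Hxy (rev_ord a); rewrite !ffunE rev_ordK.
Qed.

End Star.


Lemma I0 (a : 'I_0) (P : Prop) : P. Proof. by case: a. Qed.

Section Part.
Variables (N : nat) (A : algType algC) (star : A -> A) (Hs : is_star star)
  (u : 'I_N -> 'I_N -> A).

Definition MU p (t g : {ffun 'I_(tk p) -> 'I_N}) :=
  \prod_(a < tk p) pw star (tup p a) (u (t a) (g a)).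
Definition ML p (g t : {ffun 'I_(tl p) -> 'I_N}) :=
  \prod_(b < tl p) pw star (tlo p b) (u (g b) (t b)).

Lemma RGrE p : RGr star u p ->
 [/\ (forall ci cj, assignment p ci -> assignment p cj ->
         forall (g : {ffun 'I_(tk p) -> 'I_N}) (g' : {ffun 'I_(tl p) -> 'I_N}),
         inT_up p cj g -> inT_lo p ci g' ->
         \sum_(t | inT_up p ci t) MU t g = \sum_(t' | inT_lo p cj t') ML g' t'),
      (forall g : {ffun 'I_(tk p) -> 'I_N}, ~~ valid_up p g ->
         forall ci, assignment p ci -> \sum_(t | inT_up p ci t) MU t g = 0) &
      (forall g' : {ffun 'I_(tl p) -> 'I_N}, ~~ valid_lo p g' ->
         forall cj, assignment p cj -> \sum_(t' | inT_lo p cj t') ML g' t' = 0)].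
Proof. by []. Qed.

Definition cnone p : 'I_(tk p + tl p) -> option 'I_N := fun _ => None.

Lemma sum_ffun0 (P : pred {ffun 'I_0 -> 'I_N}) :
  (forall t, P t) -> \sum_(t | P t) (1 : A) = 1.
Proof.
move=> HP; rewrite (eq_bigl (fun _ => true)) // sumr_const card_ffun !card_ord expn0.
by [].
Qed.

Lemma pair_lo_rel c (g' : {ffun 'I_2 -> 'I_N}) : RGr star u (pair_lo c) ->
  \sum_j \prod_(b < 2) pw star (c b) (u (g' b) j) = (g' ord0 == g' ord_max)%:R.
Proof.
case/RGrE => Hi _ Hiii.
have thr : forall x, through (pair_lo c) x = false.
  move=> x; apply/negbTE; rewrite /through negb_and; apply/orP; left.
  by apply/existsPn => a; exact: (I0 a).
have As : assignment (pair_lo c) (@cnone _).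
  rewrite /assignment.
  by split => [x|//]; rewrite thr.
have sumE : forall F : {ffun 'I_2 -> 'I_N} -> A,
   \sum_(t | inT_lo (pair_lo c) (@cnone _) t) F t = \sum_j F [ffun => j].
  move=> F; rewrite (reindex_onto (fun j : 'I_N => [ffun => j] : {ffun 'I_2 -> 'I_N})
     (fun t => t ord0)).
    apply: eq_bigl => j; rewrite ffunE eqxx andbT.
    apply/andP; split; first by apply/forallP => b; apply/forallP => b'; rewrite !ffunE eqxx implybT.
    by apply/forallP => b; rewrite thr.
  move=> t /andP [/forallP V _]; apply/ffunP => b; rewrite ffunE.
  by have /forallP/(_ ord0) := V b; rewrite /sameblk eqxx => /eqP.
pose g0 : {ffun 'I_0 -> 'I_N} := [ffun => g' ord0].
have Hg0 : inT_up (pair_lo c) (@cnone _) g0.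
  by apply/andP; split; apply/forallP => a; exact: (I0 a).
case: eqP => He.
  have Hg' : inT_lo (pair_lo c) (@cnone _) g'.
    apply/andP; split; last by apply/forallP => b; rewrite thr.
    apply/forallP => b; apply/forallP => b'; apply/implyP => _.
    have E : forall b : 'I_2, g' b = g' ord0.
      by case=> [[|[|m]] Hm] //; [congr (g' _); apply: val_inj | rewrite He; congr (g' _); apply: val_inj].
    by rewrite (E b) (E b').
  have := Hi _ _ As As g0 g' Hg0 Hg'.
  rewrite /MU /ML sumE.
  under eq_bigr do rewrite big_ord0.
  rewrite sum_ffun0; last by move=> t; apply/andP; split; apply/forallP => a; exact: (I0 a).
  move=> E; rewrite (_ : true%:R = 1) // [RHS]E.
  by apply: eq_bigr => j _; apply: eq_bigr => b _; rewrite ffunE.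
have Hg' : ~~ valid_lo (pair_lo c) g'.
  apply/negP => /forallP/(_ ord0)/forallP/(_ ord_max); rewrite /sameblk eqxx /=.
  by move/eqP.
have := Hiii g' Hg' _ As; rewrite /ML sumE => E.
rewrite (_ : false%:R = 0) //; apply: (etrans _ E).
by apply: eq_bigr => j _; apply: eq_bigr => b _; rewrite ffunE.
Qed.

Lemma pair_up_rel c (g : {ffun 'I_2 -> 'I_N}) : RGr star u (pair_up c) ->
  \sum_j \prod_(a < 2) pw star (c a) (u j (g a)) = (g ord0 == g ord_max)%:R.
Proof.
case/RGrE => Hi Hii _.
have thr : forall x, through (pair_up c) x = false.
  move=> x; apply/negbTE; rewrite /through negb_and; apply/orP; right.
  by apply/existsPn => a; exact: (I0 a).
have As : assignment (pair_up c) (@cnone _).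
  rewrite /assignment.
  by split => [x|//]; rewrite thr.
have sumE : forall F : {ffun 'I_2 -> 'I_N} -> A,
   \sum_(t | inT_up (pair_up c) (@cnone _) t) F t = \sum_j F [ffun => j].
  move=> F; rewrite (reindex_onto (fun j : 'I_N => [ffun => j] : {ffun 'I_2 -> 'I_N})
     (fun t => t ord0)).
    apply: eq_bigl => j; rewrite ffunE eqxx andbT.
    apply/andP; split; first by apply/forallP => b; apply/forallP => b'; rewrite !ffunE eqxx implybT.
    by apply/forallP => b; rewrite thr.
  move=> t /andP [/forallP V _]; apply/ffunP => b; rewrite ffunE.
  by have /forallP/(_ ord0) := V b; rewrite /sameblk eqxx => /eqP.
pose g0 : {ffun 'I_0 -> 'I_N} := [ffun => g ord0].
have Hg0 : inT_lo (pair_up c) (@cnone _) g0.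
  by apply/andP; split; apply/forallP => a; exact: (I0 a).
case: eqP => He.
  have Hg : inT_up (pair_up c) (@cnone _) g.
    apply/andP; split; last by apply/forallP => b; rewrite thr.
    apply/forallP => b; apply/forallP => b'; apply/implyP => _.
    have E : forall b : 'I_2, g b = g ord0.
      by case=> [[|[|m]] Hm] //; [congr (g _); apply: val_inj | rewrite He; congr (g _); apply: val_inj].
    by rewrite (E b) (E b').
  have := Hi _ _ As As g g0 Hg Hg0.
  rewrite /MU /ML sumE.
  under [in RHS]eq_bigr do rewrite big_ord0.
  rewrite sum_ffun0; last by move=> t; apply/andP; split; apply/forallP => a; exact: (I0 a).
  move=> E; rewrite (_ : true%:R = 1) // -[RHS]E.
  by apply: eq_bigr => j _; apply: eq_bigr => b _; rewrite ffunE.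
have Hg : ~~ valid_up (pair_up c) g.
  apply/negP => /forallP/(_ ord0)/forallP/(_ ord_max); rewrite /sameblk eqxx /=.
  by move/eqP.
have := Hii g Hg _ As; rewrite /MU sumE => E.
rewrite (_ : false%:R = 0) //; apply: (etrans _ E).
by apply: eq_bigr => j _; apply: eq_bigr => b _; rewrite ffunE.
Qed.

Section Base.
Hypotheses (Hwu : RGr star u (pair_up col_wb)) (Hbu : RGr star u (pair_up col_bw))
  (Hwl : RGr star u (pair_lo col_wb)) (Hbl : RGr star u (pair_lo col_bw)).

Lemma base1 w s s0 :
  \sum_j pw star w (u s j) * star (pw star w (u s0 j)) = (s == s0)%:R.
Proof.
pose g' : {ffun 'I_2 -> 'I_N} := [ffun b : 'I_2 => if val b == 0%N then s else s0].
case: w => /=.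
  have := pair_lo_rel g' Hbl; rewrite !ffunE /= => <-.
  apply: eq_bigr => j _; rewrite !big_ord_recl big_ord0 mulr1 !ffunE /=.
  by rewrite starK.
have := pair_lo_rel g' Hwl; rewrite !ffunE /= => <-.
by apply: eq_bigr => j _; rewrite !big_ord_recl big_ord0 mulr1 !ffunE /=.
Qed.

Lemma base2 w t s :
  \sum_j star (pw star w (u j t)) * pw star w (u j s) = (t == s)%:R.
Proof.
pose g : {ffun 'I_2 -> 'I_N} := [ffun b : 'I_2 => if val b == 0%N then t else s].
case: w => /=.
  have := pair_up_rel g Hwu; rewrite !ffunE /= => <-.
  apply: eq_bigr => j _; rewrite !big_ord_recl big_ord0 mulr1 !ffunE /=.
  by rewrite starK.
have := pair_up_rel g Hbu; rewrite !ffunE /= => <-.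
by apply: eq_bigr => j _; rewrite !big_ord_recl big_ord0 mulr1 !ffunE /=.
Qed.

Lemma U1 p (s g0 : {ffun 'I_(tk p) -> 'I_N}) :
  \sum_g MU s g * star (MU g0 g) = (s == g0)%:R.
Proof.
rewrite /MU; under eq_bigr do rewrite (star_prod Hs).
rewrite (nest1 (f := fun a j => pw star (tup p a) (u (s a) j))
   (g := fun a j => star (pw star (tup p a) (u (g0 a) j)))
   (e := fun a => s a == g0 a)); last by move=> a; exact: base1.
suff -> : [forall a, s a == g0 a] = (s == g0) by [].
apply/forallP/eqP => [H|->//]; apply/ffunP => a; exact/eqP.
Qed.

Lemma U2 p (t s : {ffun 'I_(tl p) -> 'I_N}) :
  \sum_g star (ML g t) * ML g s = (t == s)%:R.
Proof.
rewrite /ML; under eq_bigr do rewrite (star_prod Hs).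
rewrite (nest2 (f := fun a j => pw star (tlo p a) (u j (s a)))
   (g := fun a j => star (pw star (tlo p a) (u j (t a))))
   (e := fun a => t a == s a)); last by move=> a; exact: base2.
suff -> : [forall a, t a == s a] = (t == s) by [].
apply/forallP/eqP => [H|->//]; apply/ffunP => a; exact/eqP.
Qed.

End Base.

End Part.


Section Comb.
Variables (N : nat) (p : tcpart).
Implicit Types (c : 'I_(tk p + tl p) -> option 'I_N).

Lemma through_blk x y : sameblk p x y -> through p x = through p y.
Proof. by rewrite /sameblk => /eqP E; rewrite /through /sameblk E. Qed.

Definition cu (t : {ffun 'I_(tk p) -> 'I_N}) : 'I_(tk p + tl p) -> option 'I_N :=
  fun x => if through p x then omap (fun a => t a) [pick a | sameblk p (upt a) x] else None.
Definition cl (t : {ffun 'I_(tl p) -> 'I_N}) : 'I_(tk p + tl p) -> option 'I_N :=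
  fun x => if through p x then omap (fun b => t b) [pick b | sameblk p (lpt b) x] else None.

Lemma cu_assign t : valid_up p t -> assignment p (cu t).
Proof.
move=> /forallP V; split.
- move=> x; rewrite /cu; case: ifP => thr //.
  case: pickP => [a _ //|H].
  by move: thr => /andP [/existsP [a Ha] _]; rewrite H in Ha.
- move=> x y Hxy; rewrite /cu (through_blk Hxy); case: ifP => // thr.
  case: pickP => [a Ha|H1]; case: pickP => [a' Ha'|H2] //=.
  + congr Some; apply/eqP; move: (V a) => /forallP /(_ a') /implyP; apply.
    by move: Ha Ha' Hxy; rewrite /sameblk => /eqP -> /eqP -> /eqP ->.
  + by have := H2 a; move: Ha Hxy; rewrite /sameblk => /eqP -> /eqP ->; rewrite eqxx.
  + by have := H1 a'; move: Ha' Hxy; rewrite /sameblk => /eqP -> /eqP <-; rewrite eqxx.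
Qed.

Lemma cl_assign t : valid_lo p t -> assignment p (cl t).
Proof.
move=> /forallP V; split.
- move=> x; rewrite /cl; case: ifP => thr //.
  case: pickP => [a _ //|H].
  by move: thr => /andP [_ /existsP [a Ha]]; rewrite H in Ha.
- move=> x y Hxy; rewrite /cl (through_blk Hxy); case: ifP => // thr.
  case: pickP => [a Ha|H1]; case: pickP => [a' Ha'|H2] //=.
  + congr Some; apply/eqP; move: (V a) => /forallP /(_ a') /implyP; apply.
    by move: Ha Ha' Hxy; rewrite /sameblk => /eqP -> /eqP -> /eqP ->.
  + by have := H2 a; move: Ha Hxy; rewrite /sameblk => /eqP -> /eqP ->; rewrite eqxx.
  + by have := H1 a'; move: Ha' Hxy; rewrite /sameblk => /eqP -> /eqP <-; rewrite eqxx.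
Qed.

Lemma cu_in t : valid_up p t -> inT_up p (cu t) t.
Proof.
move=> V; rewrite /inT_up V /=; apply/forallP => a; apply/implyP => thr.
rewrite /cu thr; case: pickP => [a' Ha'|H] /=.
  by move: V => /forallP/(_ a')/forallP/(_ a)/implyP/(_ Ha')/eqP ->.
by have := H a; rewrite /sameblk eqxx.
Qed.

Lemma cl_in t : valid_lo p t -> inT_lo p (cl t) t.
Proof.
move=> V; rewrite /inT_lo V /=; apply/forallP => a; apply/implyP => thr.
rewrite /cl thr; case: pickP => [a' Ha'|H] /=.
  by move: V => /forallP/(_ a')/forallP/(_ a)/implyP/(_ Ha')/eqP ->.
by have := H a; rewrite /sameblk eqxx.
Qed.

Lemma agree_up c c' t : assignment p c -> assignment p c' ->
  inT_up p c t -> inT_up p c' t -> c =1 c'.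
Proof.
move=> [A1 A2] [B1 B2] /andP [_ /forallP H] /andP [_ /forallP H'] x.
case thr: (through p x).
  move: (thr) => /andP [/existsP [a Ha] _].
  have tha : through p (upt a) by rewrite (through_blk Ha).
  rewrite -(A2 _ _ Ha) -(B2 _ _ Ha).
  by rewrite (eqP (implyP (H a) tha)) (eqP (implyP (H' a) tha)).
by move: (A1 x) (B1 x); rewrite thr; case: (c x); case: (c' x).
Qed.

Lemma agree_lo c c' t : assignment p c -> assignment p c' ->
  inT_lo p c t -> inT_lo p c' t -> c =1 c'.
Proof.
move=> [A1 A2] [B1 B2] /andP [_ /forallP H] /andP [_ /forallP H'] x.
case thr: (through p x).
  move: (thr) => /andP [_ /existsP [a Ha]].
  have tha : through p (lpt a) by rewrite (through_blk Ha).
  rewrite -(A2 _ _ Ha) -(B2 _ _ Ha).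
  by rewrite (eqP (implyP (H a) tha)) (eqP (implyP (H' a) tha)).
by move: (A1 x) (B1 x); rewrite thr; case: (c x); case: (c' x).
Qed.

Lemma inT_up_ext c c' t : c =1 c' -> inT_up p c t = inT_up p c' t.
Proof. by move=> E; rewrite /inT_up; congr andb; apply: eq_forallb => a; rewrite E. Qed.
Lemma inT_lo_ext c c' t : c =1 c' -> inT_lo p c t = inT_lo p c' t.
Proof. by move=> E; rewrite /inT_lo; congr andb; apply: eq_forallb => a; rewrite E. Qed.

End Comb.


Section Gen.
Variable (A : algType algC).

Lemma pred1sum (T : finType) (P : pred T) (x : T) :
  \sum_(y | P y) ((y == x)%:R : A) = (P x)%:R.
Proof.
case Px: (P x).
  rewrite (bigD1 x) //= eqxx big1 ?addr0 // => y /andP [_ /negbTE ->]; by [].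
by apply: big1 => y Py; case: eqP => // E; rewrite E Px in Py.
Qed.

Lemma sum_ind (T : finType) (P : pred T) (F : T -> A) :
  \sum_(i | P i) F i = \sum_i (P i)%:R * F i.
Proof.
rewrite big_mkcond; apply: eq_bigr => i _; case: (P i); by rewrite ?mul1r ?mul0r.
Qed.

Lemma sum_constP (T : finType) (P : pred T) (x : A) :
  \sum_(i | P i) x = x *+ (\sum_(i | P i) 1)%N.
Proof.
apply: (big_rec2 (fun a b => a = x *+ b)) => // i y1 y2 _ ->.
by rewrite mulrS.
Qed.

Lemma mulrn_inj (x y : A) n : (0 < n)%N -> x *+ n = y *+ n -> x = y.
Proof.
move=> n0; rewrite -!scaler_nat => H.
have := congr1 (fun z => ((n%:R : algC)^-1) *: z) H; rewrite /= !scalerA mulVf ?scale1r //.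
by rewrite pnatr_eq0 -lt0n.
Qed.

End Gen.


Section Main.
Variables (N : nat) (hN : (0 < N)%N) (A : algType algC) (star : A -> A)
  (Hs : is_star star) (u : 'I_N -> 'I_N -> A) (p : tcpart).
Hypotheses (Hp : RGr star u p)
  (Hwu : RGr star u (pair_up col_wb)) (Hbu : RGr star u (pair_up col_bw))
  (Hwl : RGr star u (pair_lo col_wb)) (Hbl : RGr star u (pair_lo col_bw)).
Variables (ci : 'I_(tk p + tl p) -> option 'I_N) (Aci : assignment p ci).

Local Notation o := (Ordinal hN).

Definition c1 : 'I_(tk p + tl p) -> option 'I_N :=
  fun x => if through p x then Some o else None.

Lemma Ac1 : assignment p c1.
Proof.
split => [x|x y H]; rewrite /c1; first by case: (through p x).
by rewrite (through_blk H).
Qed.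

Definition g1 : {ffun 'I_(tk p) -> 'I_N} := [ffun => o].
Definition g1' : {ffun 'I_(tl p) -> 'I_N} := [ffun => o].
Definition g0 : {ffun 'I_(tk p) -> 'I_N} := [ffun a => odflt o (ci (upt a))].

Lemma g1_in : inT_up p c1 g1.
Proof.
apply/andP; split; apply/forallP => a.
  by apply/forallP => a'; rewrite !ffunE eqxx implybT.
by apply/implyP => thr; rewrite /c1 thr ffunE.
Qed.

Lemma g1'_in : inT_lo p c1 g1'.
Proof.
apply/andP; split; apply/forallP => a.
  by apply/forallP => a'; rewrite !ffunE eqxx implybT.
by apply/implyP => thr; rewrite /c1 thr ffunE.
Qed.

Lemma g0_in : inT_up p ci g0.
Proof.
case: Aci => A1 A2.
apply/andP; split.
  by apply/forallP => a; apply/forallP => a'; apply/implyP => H; rewrite !ffunE (A2 _ _ H).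
apply/forallP => a; apply/implyP => thr; rewrite ffunE.
by move: (A1 (upt a)); rewrite thr; case: (ci (upt a)).
Qed.

Lemma stepA g' : inT_lo p ci g' ->
  \sum_(t | inT_up p ci t) MU star u t g1 = \sum_(t' | inT_lo p c1 t') ML star u g' t'.
Proof. by case/RGrE: Hp => Hi _ _; apply: Hi; [exact: Aci | exact: Ac1 | exact: g1_in]. Qed.

Lemma sum_starK (I : finType) (P : pred I) (F : I -> A) :
  \sum_(i | P i) F i = star (\sum_(i | P i) star (F i)).
Proof. by rewrite (star_sum Hs); apply: eq_bigr => i _; rewrite (starK Hs). Qed.

Lemma stepB t' : inT_lo p c1 t' ->
  \sum_(g' | inT_lo p ci g') ML star u g' t' = \sum_(g | inT_up p c1 g) MU star u g0 g.
Proof.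
move=> Ht'.
case/RGrE: Hp => Hi Hii Hiii.
suff E : \sum_(g | inT_up p c1 g) star (MU star u g0 g)
       = \sum_(g' | inT_lo p ci g') star (ML star u g' t').
  by rewrite sum_starK [RHS]sum_starK E.
pose d (g : {ffun 'I_(tk p) -> 'I_N}) (s' : {ffun 'I_(tl p) -> 'I_N}) :=
  valid_up p g && inT_lo p (cu g) s'.
have F1 : forall g, inT_up p c1 g = d g t'.
  move=> g; apply/idP/idP.
    move=> Hg; case/andP: (Hg) => V _.
    rewrite /d V /= (inT_lo_ext t' (agree_up (cu_assign V) Ac1 (cu_in V) Hg)).
    exact: Ht'.
  case/andP => V H.
  rewrite (inT_up_ext g (agree_lo Ac1 (cu_assign V) Ht' H)).
  exact: cu_in V.
have F2 : forall g', \sum_g (\sum_(s' | d g s') ML star u g' s') * star (MU star u g0 g)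
                     = (inT_lo p ci g')%:R.
  move=> g'; case V: (valid_lo p g').
    have F3 : forall g, \sum_(s' | d g s') ML star u g' s'
                        = \sum_(s | inT_up p (cl g') s) MU star u s g.
      move=> g; case Vg: (valid_up p g).
        rewrite (eq_bigl (fun s' => inT_lo p (cu g) s')) => [|s']; last by rewrite /d Vg.
        symmetry; apply: Hi; [exact: cl_assign | exact: cu_assign | exact: cu_in | exact: cl_in].
      rewrite big_pred0 => [|s']; last by rewrite /d Vg.
      by symmetry; apply: (Hii g); [rewrite Vg | exact: cl_assign].
    under eq_bigr => g _ do rewrite F3 mulr_suml.
    rewrite exchange_big /=.
    under eq_bigr => s _ do rewrite (U1 Hs Hwl Hbl).
    rewrite pred1sum.
    suff -> : inT_up p (cl g') g0 = inT_lo p ci g' by [].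
    apply/idP/idP => H.
      rewrite -(inT_lo_ext g' (agree_up (cl_assign V) Aci H g0_in)).
      exact: cl_in.
    rewrite (inT_up_ext g0 (agree_lo (cl_assign V) Aci (cl_in V) H)).
    exact: g0_in.
  rewrite (_ : inT_lo p ci g' = false); last first.
    by apply/negbTE; apply/negP => /andP [H _]; rewrite H in V.
  rewrite (_ : (false%:R : A) = 0) //.
  apply: big1 => g _.
  suff -> : \sum_(s' | d g s') ML star u g' s' = 0 by rewrite mul0r.
  case Vg: (valid_up p g).
    rewrite (eq_bigl (fun s' => inT_lo p (cu g) s')) => [|s']; last by rewrite /d Vg.
    by apply: (Hiii g'); [rewrite V | exact: cu_assign].
  by rewrite big_pred0 // => s'; rewrite /d Vg.
rewrite sum_ind.
under eq_bigr => g _ do rewrite F1 -(pred1sum A (d g)).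
under eq_bigr => g _.
  under eq_bigr => s' _ do rewrite eq_sym -(U2 Hs Hwu Hbu).
  rewrite mulr_suml.
  under eq_bigr => s' _ do rewrite mulr_suml.
  rewrite exchange_big /=.
  over.
rewrite exchange_big /= [RHS]sum_ind; apply: eq_bigr => g' _.
transitivity (star (ML star u g' t') *
   \sum_g (\sum_(s' | d g s') ML star u g' s') * star (MU star u g0 g)).
  rewrite mulr_sumr; apply: eq_bigr => g _; rewrite mulr_suml mulr_sumr.
  by apply: eq_bigr => s' _; rewrite !mulrA.
by rewrite F2 -commr_nat.
Qed.

Definition phi (t : {ffun 'I_(tl p) -> 'I_N}) : {ffun 'I_(tl p) -> 'I_N} :=
  [ffun b => if through p (lpt b) then odflt o (ci (lpt b)) else t b].
Definition psi (t : {ffun 'I_(tl p) -> 'I_N}) : {ffun 'I_(tl p) -> 'I_N} :=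
  [ffun b => if through p (lpt b) then o else t b].

Lemma phi_in t : inT_lo p c1 t -> inT_lo p ci (phi t).
Proof.
case: Aci => A1 A2; case/andP => /forallP V _.
apply/andP; split.
  apply/forallP => b; apply/forallP => b'; apply/implyP => H; rewrite !ffunE.
  rewrite -(through_blk H); case: ifP => _; first by rewrite (A2 _ _ H).
  exact: (implyP (forallP (V b) b')).
apply/forallP => b; apply/implyP => thr; rewrite ffunE thr.
by move: (A1 (lpt b)); rewrite thr; case: (ci (lpt b)).
Qed.

Lemma psi_in t : inT_lo p ci t -> inT_lo p c1 (psi t).
Proof.
case/andP => /forallP V _.
apply/andP; split.
  apply/forallP => b; apply/forallP => b'; apply/implyP => H; rewrite !ffunE.
  rewrite -(through_blk H); case: ifP => _ //.
  exact: (implyP (forallP (V b) b')).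
by apply/forallP => b; apply/implyP => thr; rewrite ffunE thr /c1 thr.
Qed.

Lemma psi_phi t : inT_lo p c1 t -> psi (phi t) = t.
Proof.
case/andP => _ /forallP H; apply/ffunP => b; rewrite !ffunE.
case: ifP => thr; rewrite ?thr //.
by move: (implyP (H b) thr); rewrite /c1 thr => /eqP [->].
Qed.

Lemma phi_psi t : inT_lo p ci t -> phi (psi t) = t.
Proof.
case/andP => _ /forallP H; apply/ffunP => b; rewrite !ffunE.
case: ifP => thr; rewrite ?thr //.
by rewrite (eqP (implyP (H b) thr)).
Qed.

Lemma main :
  \sum_(t : {ffun 'I_(tk p) -> 'I_N} | inT_up p ci t)
      \prod_(a < tk p) pw star (tup p a) (u (t a) o)
  = \sum_(t' : {ffun 'I_(tl p) -> 'I_N} | inT_lo p ci t')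
      \prod_(b < tl p) pw star (tlo p b) (u (t' b) o).
Proof.
have -> : \sum_(t : {ffun 'I_(tk p) -> 'I_N} | inT_up p ci t)
      \prod_(a < tk p) pw star (tup p a) (u (t a) o)
   = \sum_(t | inT_up p ci t) MU star u t g1.
  by apply: eq_bigr => t _; rewrite /MU; apply: eq_bigr => a _; rewrite ffunE.
have -> : \sum_(t' : {ffun 'I_(tl p) -> 'I_N} | inT_lo p ci t')
      \prod_(b < tl p) pw star (tlo p b) (u (t' b) o)
   = \sum_(t' | inT_lo p ci t') ML star u t' g1'.
  by apply: eq_bigr => t _; rewrite /ML; apply: eq_bigr => a _; rewrite ffunE.
rewrite (stepB g1'_in).
pose n c := (\sum_(t : {ffun 'I_(tl p) -> 'I_N} | inT_lo p c t) 1)%N.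
have n_eq : n ci = n c1.
  rewrite /n (reindex_onto phi psi); last by move=> t Ht; exact: phi_psi.
  apply: eq_bigl => t; apply/idP/idP.
    case/andP => H /eqP <-; exact: psi_in.
  by move=> H; rewrite phi_in //= psi_phi.
have n_pos : (0 < n c1)%N by rewrite /n (bigD1 g1') ?g1'_in.
apply: (@mulrn_inj _ _ _ (n ci)); first by rewrite n_eq.
rewrite /n -!sum_constP.
transitivity (\sum_(g' | inT_lo p ci g') \sum_(t' | inT_lo p c1 t') ML star u g' t').
  by apply: eq_bigr => g' Hg'; exact: stepA.
rewrite exchange_big /=.
rewrite [RHS]sum_constP -/(n ci) n_eq /n -sum_constP.
by apply: eq_bigr => t' Ht'; exact: stepB.
Qed.

End Main.

End Helpers.
Import Helpers.

Theorem theorem4p6 (N : nat) (hN : (0 < N)%N) (Pi : tcpart -> Prop)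
  (Hwb_up : Pi (pair_up col_wb)) (Hbw_up : Pi (pair_up col_bw))
  (Hwb_lo : Pi (pair_lo col_wb)) (Hbw_lo : Pi (pair_lo col_bw))
  (A : algType algC) (star : A -> A) (Hstar : is_star star)
  (u : 'I_N -> 'I_N -> A) (Hu : forall p, Pi p -> RGr star u p) :
  forall p, Pi p -> RSp star (fun i => u i (Ordinal hN)) p.
Proof.
move=> p Pp ci Aci.
exact: (main hN Hstar (Hu _ Pp) (Hu _ Hwb_up) (Hu _ Hbw_up) (Hu _ Hwb_lo) (Hu _ Hbw_lo) Aci).
Qed.
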